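(* Let $p\geq1$, $\mu>0$, and let $g:\mathbb{R}^n\to\mathbb{R}\cup\{+\infty\}$ be convex. Let $\lambda^{\ast}$ be the optimal solution of $$\min_{\lambda\in\mathbb{R}^n}\Big\{g(\lambda)+\frac{\mu}{1+\frac1p}\lVert\lambda\rVert^{1+\frac1p}\Big\},$$ and suppose $\lambda^{\ast}\neq0$. Let $\lambda^0\in\mathbb{R}^n$ with $\lambda^0\neq0$ and generate $\lambda^1,\dots,\lambda^N$ by: $t^k=\lVert\lambda^k\rVert^{\frac1p-1}$ if $\lambda^k\neq0$, $t^k=0$ otherwise, and $\lambda^{k+1}=\arg\min_{\lambda\in\mathbb{R}^n}\{g(\lambda)+\frac{\mu}{2}t^k\lVert\lambda\rVert^2\}$. Suppose $\lVert\lambda^0\rVert\leq\lVert\lambda^{\ast}\rVert$ and $\lambda^k\neq\lambda^{\ast}$ for $k=1,2,\dots,N$. Then $$\lVert\lambda^N-\lambda^{\ast}\rVert\leq\Big(1-\frac1p\Big)\lVert\lambda^{\ast}\rVert\Big(e^{(1-\frac1p)^{N-1}\ln\frac{\lVert\lambda^{\ast}\rVert}{\lVert\lambda^0\rVert}}-1\Big)\leq\frac{\lVert\lambda^{\ast}\rVert}{\lVert\lambda^0\rVert}\big(\lVert\lambda^{\ast}\rVert-\lVert\lambda^0\rVert\big)\Big(1-\frac1p\Big)^{N}.$$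
   Context: $\lVert\cdot\rVert$ is the Euclidean norm. The minimizers in the iteration are assumed to exist. *)

(* Defs.v *)
From HB Require Import structures.
From mathcomp Require Import all_boot all_order all_algebra.
From mathcomp Require Import all_classical all_reals all_analysis.
Set Implicit Arguments. Unset Strict Implicit. Unset Printing Implicit Defensive.
Import Order.TTheory GRing.Theory Num.Theory.
Local Open Scope ring_scope.

Definition enorm {R : realType} {n : nat} (x : 'rV[R]_n) : R :=
  Num.sqrt (\sum_(i < n) x ord0 i ^+ 2).

Definition convex_ext {R : realType} {n : nat} (g : 'rV[R]_n -> \bar R) : Prop :=
  forall (x y : 'rV[R]_n) (t : R), 0 < t < 1 ->
    let z := t *: x + (1 - t) *: y in (g z <= t%:E * g x + (1 - t)%:E * g y)%E.

Definition main_obj {R : realType} {n : nat} (g : 'rV[R]_n -> \bar R) (mu p : R)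
  (l : 'rV[R]_n) : \bar R :=
  (g l + (mu / (1 + p^-1) * (enorm l `^ (1 + p^-1)))%:E)%E.

Definition tweight {R : realType} {n : nat} (p : R) (l : 'rV[R]_n) : R :=
  if l != 0 then enorm l `^ (p^-1 - 1) else 0.

Definition sub_obj {R : realType} {n : nat} (g : 'rV[R]_n -> \bar R) (mu t : R)
  (l : 'rV[R]_n) : \bar R :=
  (g l + (mu / 2 * t * enorm l ^+ 2)%:E)%E.

Definition is_minimizer {R : realType} {n : nat} (F : 'rV[R]_n -> \bar R)
  (x : 'rV[R]_n) : Prop := forall y, (F x <= F y)%E.

(* Main.v *)
Require Import Defs.
From HB Require Import structures.
From mathcomp Require Import all_boot all_order all_algebra.
From mathcomp Require Import all_classical all_reals all_analysis.
From mathcomp Require Import ring lra.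
Import Order.TTheory GRing.Theory Num.Theory.
Local Open Scope ring_scope.
Set Implicit Arguments. Unset Strict Implicit.

Section Aux.
Context {R : realType} {n : nat}.
Implicit Types u v w : 'rV[R]_n.

Definition dot u v := \sum_(i < n) u ord0 i * v ord0 i.

Lemma dotC u v : dot u v = dot v u.
Proof. by apply: eq_bigr => i _; rewrite mulrC. Qed.

Lemma dotDr u v w : dot u (v + w) = dot u v + dot u w.
Proof. by rewrite /dot -big_split; apply: eq_bigr => i _; rewrite !mxE mulrDr. Qed.

Lemma dotNr u v : dot u (- v) = - dot u v.
Proof. by rewrite /dot -sumrN; apply: eq_bigr => i _; rewrite !mxE mulrN. Qed.

Lemma dotBr u v w : dot u (v - w) = dot u v - dot u w.
Proof. by rewrite dotDr dotNr. Qed.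

Lemma dotZr u v c : dot u (c *: v) = c * dot u v.
Proof. by rewrite /dot mulr_sumr; apply: eq_bigr => i _; rewrite !mxE mulrCA. Qed.

Lemma dotDl u v w : dot (v + w) u = dot v u + dot w u.
Proof. by rewrite dotC dotDr !(dotC u). Qed.

Lemma dotBl u v w : dot (v - w) u = dot v u - dot w u.
Proof. by rewrite dotC dotBr !(dotC u). Qed.

Lemma dotZl u v c : dot (c *: v) u = c * dot v u.
Proof. by rewrite dotC dotZr dotC. Qed.

Lemma dot_ge0 u : 0 <= dot u u.
Proof. by apply: sumr_ge0 => i _; rewrite -expr2 sqr_ge0. Qed.

Lemma enorm_sq u : enorm u ^+ 2 = dot u u.
Proof.
rewrite /enorm sqr_sqrtr; last first.
  by apply: sumr_ge0 => i _; rewrite sqr_ge0.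
by apply: eq_bigr => i _; rewrite expr2.
Qed.

Lemma enorm_ge0 u : 0 <= enorm u.
Proof. exact: sqrtr_ge0. Qed.

Lemma dot0r u : dot 0 u = 0.
Proof. by rewrite /dot big1 // => i _; rewrite mxE mul0r. Qed.

Lemma dot_eq0 u : dot u u = 0 -> u = 0.
Proof.
move=> h; apply/rowP => i; rewrite !mxE.
have hge : forall j : 'I_n, xpredT j -> 0 <= u ord0 j * u ord0 j.
  by move=> j _; rewrite -expr2 sqr_ge0.
have H := @psumr_eq0P R 'I_n xpredT (fun j => u ord0 j * u ord0 j) hge h i isT.
by move/eqP: H; rewrite mulf_eq0 orbb => /eqP; case: i => i ?; rewrite (ord1 ord0).
Qed.

Lemma enorm_gt0 u : u != 0 -> 0 < enorm u.
Proof.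
move=> hu; rewrite lt_def enorm_ge0 andbT; apply/negP => /eqP h.
have : dot u u = 0 by rewrite -enorm_sq h expr2 mulr0.
by move/(@dot_eq0 u); apply/eqP.
Qed.

Lemma CS u v : dot u v <= enorm u * enorm v.
Proof.
have [V0|Vpos] := eqVneq (dot v v) 0.
  by rewrite (@dot_eq0 v V0) dotC dot0r mulr_ge0 // enorm_ge0.
have Vgt : 0 < dot v v by rewrite lt_def Vpos dot_ge0.
set D := dot u v.
have h := dot_ge0 (dot v v *: u - D *: v).
rewrite !(dotBr, dotBl, dotZr, dotZl) (dotC v u) -/D in h.
have h2 : D ^+ 2 <= (enorm u * enorm v) ^+ 2.
  rewrite exprMn !enorm_sq.
  have e : 0 <= dot v v * (dot v v * dot u u - D ^+ 2) by nra.
  by rewrite pmulr_rge0 // subr_ge0 mulrC in e.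
have X0 := mulr_ge0 (enorm_ge0 u) (enorm_ge0 v).
move: h2 X0; clear h; move: (enorm u * enorm v) => X h2 X0.
nra.
Qed.

Lemma enorm_sub_sym u v : enorm (u - v) = enorm (v - u).
Proof. by rewrite -opprB /enorm; congr Num.sqrt; apply: eq_bigr => i _; rewrite mxE sqrrN. Qed.

Lemma dot_self u : dot u u = enorm u ^+ 2.
Proof. by rewrite enorm_sq. Qed.

Lemma lim0 (X C : R) : 0 <= C -> (forall th, 0 < th < 1 -> X <= C * th) -> X <= 0.
Proof.
move=> C0 H; rewrite leNgt; apply/negP => X0.
have hpos : 0 < 2 * (C + X) by rewrite mulr_gt0 // ltr_wpDl.
have h := H (X / (2 * (C + X))).
have hth : 0 < X / (2 * (C + X)) < 1.
  by rewrite divr_gt0 //= ltr_pdivrMr // mul1r; lra.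
move: (h hth); rewrite mulrA ler_pdivlMr // => h2.
nra.
Qed.

Lemma VI (g : 'rV[R]_n -> \bar R) (mu t : R) (a y : 'rV[R]_n) (ga gy : R) :
  0 <= mu * t -> convex_ext g -> is_minimizer (sub_obj g mu t) a ->
  g a = ga%:E -> g y = gy%:E ->
  ga - gy <= mu * t * dot a (y - a).
Proof.
move=> mt0 hconv hmin hga hgy.
rewrite -subr_le0.
apply: (@lim0 _ (mu / 2 * t * dot (y - a) (y - a))).
  apply: mulr_ge0; last exact: dot_ge0.
  by rewrite mulrAC; apply: mulr_ge0 => //; rewrite invr_ge0.
move=> th hth.
have hc := hconv y a th hth.
have hm := hmin (th *: y + (1 - th) *: a).
move: hc hm; rewrite /sub_obj hga hgy.
case: (g (th *: y + (1 - th) *: a)) => [r| |] hc hm.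
- rewrite -!EFinM -EFinD lee_fin in hc.
  rewrite -EFinD lee_fin in hm.
  rewrite !enorm_sq !(dotBr, dotBl, dotDr, dotDl, dotZr, dotZl) in hm *.
  rewrite (dotC y a) in hm *.
  have e : th * (ga - gy - mu * t * (dot a y - dot a a) -
     mu / 2 * t * (dot y y - dot a y - (dot a y - dot a a)) * th) <= 0.
    set K := mu / 2 * t.
    have -> : th * (ga - gy - mu * t * (dot a y - dot a a) -
     K * (dot y y - dot a y - (dot a y - dot a a)) * th) =
      (ga - (th * gy + (1 - th) * ga)) - (K *
    (th * (th * dot y y) + th * ((1 - th) * dot a y) +
     ((1 - th) * (th * dot a y) + (1 - th) * ((1 - th) * dot a a))) - K * dot a a).
      by rewrite /K; field; lra.
    rewrite /K; lra.
  by case/andP: hth => th0 _; rewrite -subr_le0 -(pmulr_rle0 _ th0).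
- by move: hc; rewrite -!EFinM -EFinD leye_eq.
- by move: hm; rewrite leeNy_eq.
Qed.

Lemma expR_conv (w X Y : R) : 0 <= w <= 1 ->
  expR (w * X + (1 - w) * Y) <= w * expR X + (1 - w) * expR Y.
Proof.
case/andP=> w0 w1.
set m := w * X + (1 - w) * Y.
have tang : forall Z, expR m * (1 + (Z - m)) <= expR Z.
  move=> Z; have -> : expR Z = expR (Z - m) * expR m by rewrite -expRD subrK.
  rewrite mulrC; apply: ler_wpM2r; [exact: expR_ge0 | exact: expR_ge1Dx].
have h1 := ler_wpM2l w0 (tang X).
have h2 : (1 - w) * (expR m * (1 + (Y - m))) <= (1 - w) * expR Y.
  by apply: ler_wpM2l; [rewrite subr_ge0 | exact: tang].
have e : w * (expR m * (1 + (X - m))) + (1 - w) * (expR m * (1 + (Y - m))) = expR m.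
  rewrite /m; ring.
lra.
Qed.

Lemma KI (mu al B r : R) : 0 < al <= 1 -> 0 <= mu -> 0 < B -> 0 <= r ->
  mu / (1 + al) * (r `^ (1 + al) - B `^ (1 + al))
  <= mu / 2 * B `^ (al - 1) * (r ^+ 2 - B ^+ 2).
Proof.
case/andP=> al0 al1 mu0 B0 r0.
set s := B `^ (al - 1).
have s0 : 0 < s by rewrite powR_gt0.
have eB2 : B ^+ 2 = expR (2 * ln B) by rewrite expRM_natl lnK ?posrE.
have hB1 : B `^ (1 + al) = s * B ^+ 2.
  rewrite /s /powR (gt_eqF B0) eB2 -expRD; congr expR; ring.
set w := (1 + al) / 2.
have w01 : 0 <= w <= 1.
  by rewrite /w divr_ge0 ?ler_pdivrMr //=; lra.
have claim : r `^ (1 + al) <= w * (s * r ^+ 2) + (1 - w) * (s * B ^+ 2).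
  have [->|rpos] := eqVneq r 0.
    rewrite powR0; last by apply/negP => /eqP; lra.
    case/andP: w01 => w0 w1.
    rewrite expr0n /= mulr0 mulr0 add0r; apply: mulr_ge0; first by rewrite subr_ge0.
    by apply: mulr_ge0; [exact: ltW | exact: sqr_ge0].
  have r0' : 0 < r by rewrite lt_def rpos r0.
  have er2 : r ^+ 2 = expR (2 * ln r) by rewrite expRM_natl lnK ?posrE.
  have -> : s * r ^+ 2 = expR ((al - 1) * ln B + 2 * ln r).
    by rewrite /s /powR (gt_eqF B0) er2 -expRD.
  have -> : s * B ^+ 2 = expR ((1 + al) * ln B) by rewrite -hB1 /powR (gt_eqF B0).
  have -> : r `^ (1 + al) = expR (w * ((al - 1) * ln B + 2 * ln r) + (1 - w) * ((1 + al) * ln B)).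
    by rewrite /powR (gt_eqF r0') /w; congr expR; field.
  exact: expR_conv.
have c0 : 0 <= mu / (1 + al) by rewrite divr_ge0 //; lra.
apply: le_trans (ler_wpM2l c0 (lerB claim (lexx (B `^ (1 + al))))) _.
rewrite hB1 /w le_eqVlt; apply/orP; left; apply/eqP; field.
lra.
Qed.

Lemma al_bounds (p : R) : 1 <= p -> 0 < p^-1 <= 1.
Proof. by move=> p1; rewrite invr_gt0 (lt_le_trans ltr01 p1) /= invf_le1 // (lt_le_trans ltr01 p1). Qed.

Lemma main_to_sub (g : 'rV[R]_n -> \bar R) (mu p : R) (b : 'rV[R]_n) :
  1 <= p -> 0 < mu -> b != 0 -> (forall x, g x != -oo%E) ->
  is_minimizer (main_obj g mu p) b ->
  is_minimizer (sub_obj g mu (enorm b `^ (p^-1 - 1))) b.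
Proof.
move=> p1 mu0 b0 gN hmin y.
have hm := hmin y; move: hm; rewrite /main_obj /sub_obj.
have ki := @KI mu p^-1 (enorm b) (enorm y) (al_bounds p1) (ltW mu0) (enorm_gt0 b0) (enorm_ge0 y).
move: (gN y) (gN b); case: (g y) => [ry| |]; case: (g b) => [rb| |] //= _ _.
- rewrite !lee_fin => hm; lra.
- by move=> _; rewrite leey.
Qed.

Lemma core (a b : 'rV[R]_n) (t s : R) : 0 < s <= t ->
  0 <= t * dot a (b - a) + s * dot b (a - b) ->
  s / t * enorm b <= enorm a /\ enorm a <= enorm b /\
  enorm (a - b) <= (1 - s / t) * enorm b.
Proof.
case/andP=> s0 st h.
have t0 : 0 < t by apply: lt_le_trans st.
have cs1 := CS a b.
have cs2 := CS b (b - a).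
rewrite enorm_sub_sym in cs2.
have eE : enorm (a - b) ^+ 2 = enorm a ^+ 2 - 2 * dot a b + enorm b ^+ 2.
  rewrite !enorm_sq !(dotBr, dotBl) (dotC b a); ring.
rewrite !(dotBr, dotBl) (dotC b a) !dot_self in h.
rewrite !(dotBr, dotBl) !dot_self (dotC b a) in cs2.
have A0 := enorm_ge0 a; have B0 := enorm_ge0 b; have E0 := enorm_ge0 (a - b).
move: cs1 cs2 h eE A0 B0 E0.
move: (enorm a) (enorm b) (enorm (a - b)) (dot a b) => A B E D cs1 cs2 h eE A0 B0 E0.
have key : (t * A - s * B) * (A - B) <= 0 by nra.
have AB : A <= B.
  rewrite leNgt; apply/negP => BA.
  have : 0 < (t * A - s * B) * (A - B) by apply: mulr_gt0; nra.
  lra.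
have sA : s * B <= t * A.
  rewrite leNgt; apply/negP => As.
  have [AeB|AnB] := eqVneq A B.
    by move: As; rewrite AeB; nra.
  have : 0 < (t * A - s * B) * (A - B).
    by rewrite -mulrNN; apply: mulr_gt0; rewrite opprB subr_gt0 // lt_def eq_sym AnB AB.
  lra.
split; first by rewrite mulrAC (ler_pdivrMr _ _ t0) (mulrC A).
split=> //.
have tE : t * E ^+ 2 <= (t - s) * B * E.
  have : t * E ^+ 2 <= (t - s) * (B ^+ 2 - D) by rewrite eE; nra.
  move=> h1; apply: le_trans h1 _; rewrite -mulrA; apply: ler_wpM2l; lra.
have -> : (1 - s / t) * B = ((t - s) * B) / t by field; lra.
rewrite ler_pdivlMr //.
have [E0'|Epos] := eqVneq E 0.
  by rewrite E0' mul0r; apply: mulr_ge0 => //; lra.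
have Eg : 0 < E by rewrite lt_def Epos E0.
by rewrite -(ler_pM2r Eg) mulrAC mulrC -expr2.
Qed.

Lemma final_ineq (q l0 l B E : R) (N : nat) : 0 <= q <= 1 -> 0 <= l0 -> 0 < B ->
  l <= q ^+ N.-1 * l0 -> (1 <= N)%N -> E <= (1 - expR (- (q * l))) * B ->
  E <= q * B * (expR (q ^+ N.-1 * l0) - 1) /\
  q * B * (expR (q ^+ N.-1 * l0) - 1) <= B * (expR l0 - 1) * q ^+ N.
Proof.
case/andP=> q0 q1 l00 B0 hl N1 hE.
set a := q ^+ N.-1.
have a0 : 0 <= a by rewrite exprn_ge0.
have a1 : a <= 1 by rewrite exprn_ile1.
have qB0 : 0 <= q * B by rewrite mulr_ge0 // ltW.
split.
  apply: le_trans hE _.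
  have h1 : expR (- (q * (a * l0))) <= expR (- (q * l)).
    by rewrite ler_expR lerN2; apply: ler_wpM2l.
  have h2 := expR_ge1Dx (- (q * (a * l0))).
  have h3 := expR_ge1Dx (a * l0).
  have h4 : (1 - expR (- (q * l))) * B <= (q * (a * l0)) * B.
    by rewrite ler_pM2r //; lra.
  apply: le_trans h4 _.
  rewrite mulrAC; apply: ler_wpM2l => //; lra.
have hc := @expR_conv a l0 0 (introT andP (conj a0 a1)).
rewrite mulr0 addr0 expR0 mulr1 in hc.
have -> : q ^+ N = q * a by rewrite /a -exprS prednK.
have -> : B * (expR l0 - 1) * (q * a) = q * B * (a * (expR l0 - 1)) by ring.
apply: ler_wpM2l => //; lra.
Qed.

Lemma enorm0 : enorm (0 : 'rV[R]_n) = 0.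
Proof. by rewrite /enorm big1 ?sqrtr0 // => i _; rewrite mxE expr0n. Qed.

Lemma sub_fin (g : 'rV[R]_n -> \bar R) (mu t : R) (a x0 : 'rV[R]_n) :
  (forall x, g x != -oo%E) -> g x0 != +oo%E -> is_minimizer (sub_obj g mu t) a ->
  exists ga, g a = ga%:E.
Proof.
move=> gN hx0 hmin; have := hmin x0; rewrite /sub_obj.
move: (gN x0) hx0 (gN a); case: (g x0) => [r0| |] //; case: (g a) => [ra| |] //= _ _ _.
by exists ra.
Qed.
End Aux.
Unset Implicit Arguments.

Theorem theoremA1 (R : realType) (n : nat) (p mu : R)
  (g : 'rV[R]_n -> \bar R) (lstar : 'rV[R]_n) (lam : nat -> 'rV[R]_n) (N : nat) :
  1 <= p -> 0 < mu ->
  (forall x, g x != -oo%E) -> (exists x, g x != +oo%E) ->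
  convex_ext g ->
  is_minimizer (main_obj g mu p) lstar ->
  lstar != 0 ->
  lam 0%N != 0 ->
  (forall k, (k < N)%N -> is_minimizer (sub_obj g mu (tweight p (lam k))) (lam k.+1)) ->
  (1 <= N)%N ->
  enorm (lam 0%N) <= enorm lstar ->
  (forall k, (1 <= k <= N)%N -> lam k != lstar) ->
  enorm (lam N - lstar)
    <= (1 - p^-1) * enorm lstar *
       (expR ((1 - p^-1) ^+ (N.-1) * ln (enorm lstar / enorm (lam 0%N))) - 1)
  /\
  (1 - p^-1) * enorm lstar *
       (expR ((1 - p^-1) ^+ (N.-1) * ln (enorm lstar / enorm (lam 0%N))) - 1)
    <= enorm lstar / enorm (lam 0%N) * (enorm lstar - enorm (lam 0%N)) * (1 - p^-1) ^+ N.
Proof.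
move=> hp hmu gN [x0 hx0] hconv hmin hb h0 hit hN hle _.
have /andP[al0 al1] := al_bounds hp.
set q := 1 - p^-1.
have q0 : 0 <= q by rewrite /q subr_ge0.
have q1 : q <= 1 by rewrite /q; lra.
set B := enorm lstar.
have B0 : 0 < B := enorm_gt0 hb.
set s := B `^ (p^-1 - 1).
have hsub := main_to_sub hp hmu hb gN hmin.
have [gb hgb] := sub_fin gN hx0 hsub.
have s0 : 0 < s by rewrite powR_gt0.
have step : forall k, (k < N)%N -> lam k != 0 -> enorm (lam k) <= B ->
  let r := expR (- (q * (ln B - ln (enorm (lam k))))) in
  r * B <= enorm (lam k.+1) /\ enorm (lam k.+1) <= B /\
  enorm (lam k.+1 - lstar) <= (1 - r) * B.
  move=> k hk hk0 hkB.
  set nk := enorm (lam k).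
  have nk0 : 0 < nk := enorm_gt0 hk0.
  set t := tweight p (lam k).
  have et : t = nk `^ (p^-1 - 1) by rewrite /t /tweight hk0.
  have [ga hga] := sub_fin gN hx0 (hit k hk).
  have t0 : 0 < t by rewrite et powR_gt0.
  have vi1 := VI (mulr_ge0 (ltW hmu) (ltW t0)) hconv (hit k hk) hga hgb.
  have vi2 := VI (mulr_ge0 (ltW hmu) (ltW s0)) hconv hsub hgb hga.
  have hst : 0 < s <= t.
    rewrite s0 /= et /s /powR (gt_eqF B0) (gt_eqF nk0) ler_expR.
    apply: ler_wnM2l; first by lra.
    by rewrite ler_ln ?posrE.
  have hm : 0 <= t * dot (lam k.+1) (lstar - lam k.+1) + s * dot lstar (lam k.+1 - lstar).
    have : 0 <= mu * (t * dot (lam k.+1) (lstar - lam k.+1) + s * dot lstar (lam k.+1 - lstar)).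
      lra.
    by rewrite pmulr_rge0.
  have [c1 [c2 c3]] := core hst hm.
  have -> : expR (- (q * (ln B - ln nk))) = s / t.
    rewrite /s et /powR (gt_eqF B0) (gt_eqF nk0) -expRN -expRD; congr expR; rewrite /q; ring.
  by [].
set l0 := ln B - ln (enorm (lam 0%N)).
have ind : forall k, (k < N)%N -> lam k != 0 /\ enorm (lam k) <= B /\
    ln B - ln (enorm (lam k)) <= q ^+ k * l0.
  elim=> [|k IH] hk.
    by split=> //; split=> //; rewrite expr0 mul1r.
  have hk' : (k < N)%N by apply: ltnW.
  have [hk0 [hkB hl]] := IH hk'.
  have [c1 [c2 c3]] := step k hk' hk0 hkB.
  move: c1 c2 c3; set r := expR _ => c1 c2 c3.
  have r0 : 0 < r by rewrite expR_gt0.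
  have pos : 0 < enorm (lam k.+1) by apply: lt_le_trans c1; rewrite mulr_gt0.
  split.
    by apply/negP => /eqP e; rewrite e enorm0 ltxx in pos.
  split=> //.
  have l1 : ln (r * B) <= ln (enorm (lam k.+1)) by rewrite ler_ln ?posrE // mulr_gt0.
  rewrite lnM ?posrE // /r expRK in l1.
  rewrite exprS -mulrA.
  have := ler_wpM2l q0 hl.
  lra.
have hk : (N.-1 < N)%N by rewrite ltn_predL.
have [hk0 [hkB hl]] := ind N.-1 hk.
have [_ [_ c3]] := step N.-1 hk hk0 hkB.
rewrite prednK // in c3.
have n00 : 0 < enorm (lam 0%N) := enorm_gt0 h0.
have el0 : ln (B / enorm (lam 0%N)) = l0 by rewrite ln_div ?posrE.
rewrite el0.
have l00 : 0 <= l0.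
  by rewrite -el0 ln_ge0 // ler_pdivlMr // mul1r.
have [f1 f2] := final_ineq (introT andP (conj q0 q1)) l00 B0 hl hN c3.
split=> //.
apply: le_trans f2 _.
have -> : expR l0 = B / enorm (lam 0%N) by rewrite -el0 lnK // posrE divr_gt0.
rewrite le_eqVlt; apply/orP; left; apply/eqP.
by field; rewrite gt_eqF.
Qed.
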